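(* Let $G=(V,E)$ be a graph with nonnegative edge lengths $l_e$, root $r$, and integer demands $d_v>0$ on a set of demand nodes, with total demand $D=\sum_v d_v$. Fix $\epsilon>0$, let $K=\lceil \log_{1+\epsilon} D\rceil$, $M_i=(1+\epsilon)^i$ and $A_i(x)=\min\{x,M_i\}$ for $0\le i\le K$. Run the following procedure: (1) for each $i=0,\dots,K$ let $T_i$ be a routing tree returned by a (deterministic) $\lambda$-approximation algorithm for the single-sink rent-or-buy problem with cost function $A_i$; (2) for $i=1,\dots,K$ in increasing order, if $A_i(T_{i-1})<A_i(T_i)$ set $T_i\leftarrow T_{i-1}$; (3) for $i=K-1,\dots,0$ in decreasing order, if $A_i(T_{i+1})<A_i(T_i)$ set $T_i\leftarrow T_{i+1}$. Let $R_i$ and $B_i$ be the rent cost and normalized buy cost of the resulting tree $T_i$ (with respect to $M_i$). Then for every $i$ with $0\le i<K$ we have $B_i\ge B_{i+1}$ and $R_i\le R_{i+1}$.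
   Context: A routing tree is a tree in $G$ containing $r$ and all demand nodes; each demand node $v$ sends $d_v$ units of flow to $r$ along its unique tree path, and $x_e$ denotes the total flow on edge $e$. For a function $f$, the cost of a routing tree $T$ is $f(T)=\sum_{e\in T} l_e f(x_e)$. The single-sink rent-or-buy (SSRoB) problem with parameter $M$ is to find a routing tree minimizing $A(T)$ where $A(x)=\min\{x,M\}$; a $\lambda$-approximation algorithm returns a routing tree whose cost is at most $\lambda$ times the optimum. For a routing tree $T_i$ with flows $x_e$, its rent cost is $R_i=\sum_{e\in T_i,\,x_e<M_i} l_e A_i(x_e)$ and its normalized buy cost is $B_i=\sum_{e\in T_i,\,x_e\ge M_i} l_e$, so that $A_i(T_i)=R_i+M_iB_i$. *)

(* Defs.v *)
From HB Require Import structures.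
From mathcomp Require Import all_boot all_order all_algebra.
From mathcomp Require Export reals exp.
Set Implicit Arguments. Unset Strict Implicit. Unset Printing Implicit Defensive.
Import Order.TTheory GRing.Theory Num.Theory.
Local Open Scope ring_scope.

Section Defs.
Variables (R : realType) (V : finType).

(* A graph is given by V : finType and an edge set E : {set {set V}} whose
   elements are 2-element subsets of V.  A subset T of edges is a set of edges. *)

Definition tree_adj (T : {set {set V}}) : rel V := fun u v => [set u; v] \in T.

Definition tree_vertices (r : V) (T : {set {set V}}) : {set V} :=
  r |: \bigcup_(e in T) e.

Definition is_routing_tree (E : {set {set V}}) (r : V) (Dm : {set V})
    (T : {set {set V}}) : Prop :=
  [/\ T \subset E,
      (forall u v, u \in tree_vertices r T -> v \in tree_vertices r T ->
         connect (tree_adj T) u v),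
      #|T| = #|tree_vertices r T|.-1
    & Dm \subset tree_vertices r T].

(* flow x_e on tree edge e: total demand of the demand nodes whose (unique)
   tree path to r uses e, i.e. which are disconnected from r in T \ {e} *)
Definition flow (r : V) (Dm : {set V}) (d : V -> nat) (T : {set {set V}})
    (e : {set V}) : nat :=
  \sum_(v in Dm | ~~ connect (tree_adj (T :\ e)) v r) d v.

Definition Afun (M x : R) : R := Num.min x M.

Definition Acost (l : {set V} -> R) (r : V) (Dm : {set V}) (d : V -> nat)
    (M : R) (T : {set {set V}}) : R :=
  \sum_(e in T) l e * Afun M (flow r Dm d T e)%:R.

Definition rent_cost (l : {set V} -> R) (r : V) (Dm : {set V}) (d : V -> nat)
    (M : R) (T : {set {set V}}) : R :=
  \sum_(e in T | (flow r Dm d T e)%:R < M) l e * Afun M (flow r Dm d T e)%:R.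

Definition nbuy_cost (l : {set V} -> R) (r : V) (Dm : {set V}) (d : V -> nat)
    (M : R) (T : {set {set V}}) : R :=
  \sum_(e in T | M <= (flow r Dm d T e)%:R) l e.

(* The procedure.  C i T stands for A_i(T), T0 i for the tree of step (1). *)
Section Procedure.
Variables (C : nat -> {set {set V}} -> R) (T0 : nat -> {set {set V}}) (K : nat).

(* step (2): trees after the increasing pass, i = 0..K *)
Fixpoint fwd (i : nat) : {set {set V}} :=
  match i with
  | 0 => T0 0
  | j.+1 => if C j.+1 (fwd j) < C j.+1 (T0 j.+1) then fwd j else T0 j.+1
  end.

(* step (3): bwd_aux n is the final tree at index K - n *)
Fixpoint bwd_aux (n : nat) : {set {set V}} :=
  match n with
  | 0 => fwd K
  | m.+1 => if C (K - m.+1)%N (bwd_aux m) < C (K - m.+1)%N (fwd (K - m.+1))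
            then bwd_aux m else fwd (K - m.+1)
  end.

Definition final_tree (i : nat) : {set {set V}} := bwd_aux (K - i).

End Procedure.
End Defs.

(* Main.v *)
Require Import Defs.
From mathcomp Require Import all_boot all_order all_algebra.
From mathcomp Require Import reals exp.
From mathcomp Require Import zify ring lra.
Import Order.TTheory GRing.Theory Num.Theory.
Local Open Scope ring_scope.

Section Aux.
Variables (R : realType) (V : finType).

Lemma H1 (l x M M' : R) : 0 <= l -> M <= M' ->
  (M' - M) * (if M' <= x then l else 0) <= l * Num.min x M' - l * Num.min x M.
Proof.
move=> hl hM; case: (lerP M' x) => h.
  rewrite min_r; last by apply: le_trans h.
  by rewrite mulrBl mulrC [M * l]mulrC.
rewrite mulr0; case: (lerP x M) => h2; first by rewrite subrr.
nra.
Qed.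

Lemma H2 (l x M M' : R) : 0 <= l -> M <= M' ->
  l * Num.min x M' - l * Num.min x M <= (M' - M) * (if M <= x then l else 0).
Proof.
move=> hl hM; case: (lerP M x) => h.
  have : Num.min x M' <= M' by rewrite ge_min lexx orbT.
  move=> h3; nra.
rewrite mulr0 min_l; last by apply: le_trans (ltW h) hM.
by rewrite subrr.
Qed.

Lemma H3 (l x M M' : R) : 0 <= l -> M <= M' ->
  l * Num.min x M <= (if x < M' then l * Num.min x M' else 0) + M * (if M' <= x then l else 0).
Proof.
move=> hl hM; case: (ltrP x M') => h.
  rewrite mulr0 addr0.
  have : Num.min x M <= x by rewrite ge_min lexx.
  move=> h3; nra.
rewrite add0r min_r; last by apply: le_trans hM h.
by rewrite mulrC.
Qed.

Lemma H4 (l x M : R) :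
  l * Num.min x M = (if x < M then l * Num.min x M else 0) + M * (if M <= x then l else 0).
Proof.
case: (ltrP x M) => h; first by rewrite mulr0 addr0.
by rewrite add0r mulrC.
Qed.

Variables (E : {set {set V}}) (l : {set V} -> R) (r : V) (Dm : {set V}) (d : V -> nat).
Hypothesis hl : forall e, e \in E -> 0 <= l e.

Local Notation Ac := (Acost l r Dm d).
Local Notation Rc := (rent_cost l r Dm d).
Local Notation Bc := (nbuy_cost l r Dm d).

Lemma nbE (M : R) (T : {set {set V}}) : Bc M T = \sum_(e in T) (if M <= (flow r Dm d T e)%:R then l e else 0).
Proof. by rewrite /nbuy_cost big_mkcondr. Qed.

Lemma rcE (M : R) (T : {set {set V}}) : Rc M T = \sum_(e in T)
   (if (flow r Dm d T e)%:R < M then l e * Afun M (flow r Dm d T e)%:R else 0).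
Proof. by rewrite /rent_cost big_mkcondr. Qed.

Lemma L1 (M M' : R) (T : {set {set V}}) : T \subset E -> M <= M' ->
  (M' - M) * Bc M' T <= Ac M' T - Ac M T.
Proof.
move=> sT hM; rewrite nbE /Acost -sumrB mulr_sumr; apply: ler_sum => e eT.
by apply: H1 => //; apply: hl; apply: (subsetP sT).
Qed.

Lemma L2 (M M' : R) (T : {set {set V}}) : T \subset E -> M <= M' ->
  Ac M' T - Ac M T <= (M' - M) * Bc M T.
Proof.
move=> sT hM; rewrite nbE /Acost -sumrB mulr_sumr; apply: ler_sum => e eT.
by apply: H2 => //; apply: hl; apply: (subsetP sT).
Qed.

Lemma L3 (M M' : R) (T : {set {set V}}) : T \subset E -> M <= M' ->
  Ac M T <= Rc M' T + M * Bc M' T.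
Proof.
move=> sT hM; rewrite nbE rcE /Acost mulr_sumr -big_split; apply: ler_sum => e eT.
by apply: H3 => //; apply: hl; apply: (subsetP sT).
Qed.

Lemma L4 (M : R) (T : {set {set V}}) : Ac M T = Rc M T + M * Bc M T.
Proof.
rewrite nbE rcE /Acost mulr_sumr -big_split; apply: eq_bigr => e _.
exact: H4.
Qed.

Lemma key (M M' : R) (T T' : {set {set V}}) : T \subset E -> T' \subset E -> 0 <= M -> M < M' ->
  Ac M T <= Ac M T' -> Ac M' T' <= Ac M' T ->
  Bc M' T' <= Bc M T /\ Rc M T <= Rc M' T'.
Proof.
move=> sT sT' hM0 hM h1 h2.
have hMl := ltW hM.
have a1 := L1 M M' T' sT' hMl; have a2 := L2 M M' T sT hMl.
have hb : Bc M' T' <= Bc M T.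
  have : (M' - M) * Bc M' T' <= (M' - M) * Bc M T by lra.
  by rewrite ler_pM2l // subr_gt0.
split => //.
have := L3 M M' T' sT' hMl; have := L4 M T; have := ler_wpM2l hM0 hb.
move=> h3 h4 h5; lra.
Qed.

End Aux.

Section Proc.
Variables (R : realType) (V : finType).
Variables (C : nat -> {set {set V}} -> R) (T0 : nat -> {set {set V}}) (K : nat).

Lemma final_step i : (i < K)%N ->
  final_tree C T0 K i = if C i (final_tree C T0 K i.+1) < C i (fwd C T0 i)
                        then final_tree C T0 K i.+1 else fwd C T0 i.
Proof.
move=> hi; rewrite /final_tree.
have -> : (K - i = (K - i.+1).+1)%N by lia.
rewrite /=.
have -> : (K - (K - i.+1).+1 = i)%N by lia.
by [].
Qed.

Lemma final_K : final_tree C T0 K K = fwd C T0 K.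
Proof. by rewrite /final_tree subnn. Qed.

Lemma fwd_step j : C j.+1 (fwd C T0 j.+1) <= C j.+1 (fwd C T0 j).
Proof.
rewrite /=; case: ifP => h //; by rewrite leNgt h.
Qed.

Lemma final_le_fwd j : (j <= K)%N -> C j (final_tree C T0 K j) <= C j (fwd C T0 j).
Proof.
rewrite leq_eqVlt => /orP[/eqP -> | hj]; first by rewrite final_K.
rewrite final_step //; case: ifP => h //; exact: ltW.
Qed.

Lemma final_ineq i : (i < K)%N ->
  C i (final_tree C T0 K i) <= C i (final_tree C T0 K i.+1) /\
  C i.+1 (final_tree C T0 K i.+1) <= C i.+1 (final_tree C T0 K i).
Proof.
move=> hi; rewrite [final_tree C T0 K i]final_step //.
case: ifP => h; first by split.
split; first by rewrite leNgt h.
exact: le_trans (@final_le_fwd i.+1 hi) (fwd_step i).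
Qed.

Lemma fwd_in j : exists2 k, (k <= j)%N & fwd C T0 j = T0 k.
Proof.
elim: j => [|j [k hk e]]; first by exists 0%N.
rewrite /= e; case: ifP => _; first by exists k => //; lia.
by exists j.+1.
Qed.

Lemma final_in i : exists2 k, (k <= K)%N & final_tree C T0 K i = T0 k.
Proof.
rewrite /final_tree; elim: (K - i)%N => [|m [k hk e]] /=.
  by have [k hk ->] := fwd_in K; exists k.
rewrite e; case: ifP => _; first by exists k.
have [k' hk' ->] := fwd_in (K - m.+1); exists k' => //; lia.
Qed.

End Proc.

Theorem lemma4 (R : realType) (V : finType) (E : {set {set V}})
  (l : {set V} -> R) (r : V) (Dm : {set V}) (d : V -> nat)
  (eps lambda : R) (K : nat) (alg : R -> {set {set V}}) :
  (forall e, e \in E -> #|e| = 2%N) ->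
  (forall e, e \in E -> 0 <= l e) ->
  (forall v, v \in Dm -> (0 < d v)%N) ->
  0 < eps ->
  (K%:Z = Num.ceil (ln ((\sum_(v in Dm) d v)%N%:R : R) / ln (1 + eps))) ->
  (* alg is a deterministic lambda-approximation algorithm for SSRoB with
     parameter M_i = (1+eps)^i, for each 0 <= i <= K *)
  (forall i, (i <= K)%N ->
     is_routing_tree E r Dm (alg ((1 + eps) ^+ i)) /\
     (forall T, is_routing_tree E r Dm T ->
        Acost l r Dm d ((1 + eps) ^+ i) (alg ((1 + eps) ^+ i))
          <= lambda * Acost l r Dm d ((1 + eps) ^+ i) T)) ->
  let M := fun i : nat => (1 + eps) ^+ i in
  let C := fun (i : nat) (T : {set {set V}}) => Acost l r Dm d (M i) T in
  let Tf := final_tree C (fun i => alg (M i)) K in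
  forall i, (i < K)%N ->
    nbuy_cost l r Dm d (M i.+1) (Tf i.+1) <= nbuy_cost l r Dm d (M i) (Tf i) /\
    rent_cost l r Dm d (M i) (Tf i) <= rent_cost l r Dm d (M i.+1) (Tf i.+1).
Proof.
move=> _ hl _ heps _ halg M C Tf i hi.
have sub j : Tf j \subset E.
  rewrite /Tf; have [k hk ->] := @final_in R V C (fun i => alg (M i)) K j.
  by have [[]] := halg k hk.
have [h1 h2] : C i (Tf i) <= C i (Tf i.+1) /\ C i.+1 (Tf i.+1) <= C i.+1 (Tf i)
  by exact: (@final_ineq R V C (fun i => alg (M i)) K i hi).
rewrite /C in h1 h2.
have hM0 : 0 < M i by rewrite /M; apply: exprn_gt0; lra.
have hMM : M i < M i.+1.
  rewrite /M exprS; have : 0 < (1 + eps) ^+ i := hM0.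
  move=> h; nra.
clearbody Tf C M.
exact: (@key R V E l r Dm d hl (M i) (M i.+1) (Tf i) (Tf i.+1) (sub i) (sub i.+1) (ltW hM0) hMM h1 h2).
Qed.
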